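(* Let $(X,S)$ be an $S$-metric space, $r\ge0$, and let $\{x_n\}$ be an $r$-statistically convergent sequence in $X$. If $\{\xi_n\}$ is a sequence in $st\text{-}LIM^r x_n$ converging to $\xi\in X$, then $\xi\in st\text{-}LIM^r x_n$.
   Context: An $S$-metric on a nonempty set $X$ is a function $S:X^3\to[0,\infty)$ such that for all $x,y,z,a\in X$: $S(x,y,z)=0$ if and only if $x=y=z$, and $S(x,y,z)\le S(x,x,a)+S(y,y,a)+S(z,z,a)$. A sequence $\{\xi_n\}$ converges to $\xi$ if for every $\varepsilon>0$ there is $k$ with $S(\xi_n,\xi_n,\xi)<\varepsilon$ for all $n\ge k$. For $B\subset\mathbb N$ the natural density is $\delta(B)=\lim_{n\to\infty}\frac{|\{k\in B:k\le n\}|}{n}$ when the limit exists. For $r\ge0$, $\{x_n\}$ is $r$-statistically convergent to $x$ if for every $\varepsilon>0$, $\delta(\{n\in\mathbb N: S(x_n,x_n,x)\ge r+\varepsilon\})=0$; $st\text{-}LIM^r x_n$ denotes the set of all such $x\in X$, and $\{x_n\}$ is called $r$-statistically convergent if this set is nonempty. *)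

(* Defs.v *)
From Stdlib Require Import Reals Lra ClassicalEpsilon.
Open Scope R_scope.
Set Implicit Arguments.

Definition is_S_metric (X : Type) (S : X -> X -> X -> R) : Prop :=
  (forall x y z, 0 <= S x y z) /\
  (forall x y z, S x y z = 0 <-> (x = y /\ y = z)) /\
  (forall x y z a, S x y z <= S x x a + S y y a + S z z a).

Definition S_converges (X : Type) (S : X -> X -> X -> R)
  (u : nat -> X) (l : X) : Prop :=
  forall eps, 0 < eps -> exists k : nat, forall n, (k <= n)%nat -> S (u n) (u n) l < eps.

Definition indic (B : nat -> Prop) (k : nat) : R :=
  if excluded_middle_informative (B k) then 1 else 0.

Fixpoint count_upto (B : nat -> Prop) (n : nat) : R :=
  match n with
  | O => 0
  | Datatypes.S m => count_upto B m + indic B (Datatypes.S m)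
  end.

Definition has_density (B : nat -> Prop) (d : R) : Prop :=
  Un_cv (fun n => count_upto B n / INR n) d.

Definition r_stat_conv (X : Type) (S : X -> X -> X -> R)
  (r : R) (u : nat -> X) (x : X) : Prop :=
  forall eps, 0 < eps -> has_density (fun n => S (u n) (u n) x >= r + eps) 0.

Definition st_LIM (X : Type) (S : X -> X -> X -> R) (r : R) (u : nat -> X) : X -> Prop :=
  fun x => r_stat_conv S r u x.

(* Main.v *)
Require Import Defs.
From Stdlib Require Import Reals Lra ClassicalEpsilon.
Open Scope R_scope.

Lemma count_nonneg (B : nat -> Prop) n : 0 <= count_upto B n.
Proof.
  induction n as [|n IH]; simpl; [lra|].
  unfold indic; destruct (excluded_middle_informative _); lra.
Qed.

Lemma count_mono (B C : nat -> Prop) n : (forall k, B k -> C k) ->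
  count_upto B n <= count_upto C n.
Proof.
  intros H; induction n as [|n IH]; simpl; [lra|].
  unfold indic; destruct (excluded_middle_informative (B _));
  destruct (excluded_middle_informative (C _)); try lra.
  exfalso; auto.
Qed.

Lemma density_sub (B C : nat -> Prop) : (forall k, B k -> C k) ->
  has_density C 0 -> has_density B 0.
Proof.
  intros H HC eps Heps. destruct (HC eps Heps) as [N HN].
  exists N. intros n Hn. specialize (HN n Hn). unfold R_dist in *.
  rewrite Rminus_0_r in *.
  assert (Hi : 0 <= / INR n).
  { destruct n. simpl. rewrite Rinv_0. lra.
    apply Rlt_le, Rinv_0_lt_compat, lt_0_INR. apply Nat.lt_0_succ. }
  pose proof (count_nonneg B n). pose proof (count_nonneg C n).
  pose proof (count_mono B C n H).
  assert (0 <= count_upto B n / INR n) by (apply Rmult_le_pos; lra).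
  assert (count_upto B n / INR n <= count_upto C n / INR n)
    by (apply Rmult_le_compat_r; lra).
  rewrite Rabs_right in * by lra. lra.
Qed.

Theorem theorem4p4 (X : Type) (S : X -> X -> X -> R) (HS : is_S_metric S)
  (r : R) (hr : 0 <= r) (x : nat -> X)
  (hconv : exists y, st_LIM S r x y)
  (xi : nat -> X) (l : X)
  (hxi : forall n, st_LIM S r x (xi n))
  (hlim : S_converges S xi l) :
  st_LIM S r x l.
Proof.
  destruct HS as [Hnn [H0 Htri]].
  assert (Hzero : forall a, S a a a = 0) by (intro a; apply H0; auto).
  assert (Hsym : forall a b, S a a b = S b b a).
  { intros a b. apply Rle_antisym.
    - pose proof (Htri a a b a). rewrite Hzero in H. lra.
    - pose proof (Htri b b a b). rewrite Hzero in H. lra. }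
  intros eps Heps.
  destruct (hlim (eps/4)) as [k Hk]; [lra|].
  specialize (Hk k (le_n k)).
  apply (density_sub _ (fun n => S (x n) (x n) (xi k) >= r + eps/2)).
  - intros n Hn. pose proof (Htri l l (x n) (xi k)).
    rewrite (Hsym l (xi k)) in H. rewrite (Hsym (x n) l) in Hn. lra.
  - apply (hxi k). lra.
Qed.
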